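(* Let $b\ge2$ be an integer, $\lambda\in(1/b,1)$, and let $\phi$ be a real analytic $\mathbb{Z}$-periodic function satisfying condition (H). Then there exist $\varepsilon_1>0$ and a positive integer $Q_1$ such that for every $f\in\mathcal{F}_1$: $\sup_{x\in[0,1]}|f'(x)|\ge\varepsilon_1$, and for every $x\in[0,1]$ there exists $k\in\{1,\dots,Q_1\}$ with $|f^{(k)}(x)|\ge\varepsilon_1$.
   Context: $\Sigma=\{0,\dots,b-1\}^{\mathbb{Z}_+}$, $\gamma=1/(b\lambda)$, $Y(x,\mathbf{j})=-\sum_{n\ge1}\gamma^n\phi'\!\left(\frac{x}{b^n}+\frac{j_1}{b^n}+\cdots+\frac{j_n}{b}\right)$, $\Gamma_{\mathbf{j}}(x)=\int_0^xY(t,\mathbf{j})dt$. Condition (H): $Y(\cdot,\mathbf{j})-Y(\cdot,\mathbf{i})\not\equiv0$ for all $\mathbf{i}\ne\mathbf{j}$. For $n\in\mathbb{Z}_+$, $\mathcal{F}_n=\{\Gamma_{\mathbf{u}}-\Gamma_{\mathbf{v}}:\mathbf{u},\mathbf{v}\in\Sigma,\ u_n\ne v_n,\ u_j=v_j\text{ for }1\le j<n\}$. *)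

(* Defs.v *)
From Stdlib Require Import Reals.
From Coquelicot Require Import Coquelicot.
Open Scope R_scope.

Definition real_analytic (phi : R -> R) : Prop :=
  forall x0 : R, exists (a : nat -> R) (r : R), 0 < r /\
    forall x, Rabs (x - x0) < r -> is_pseries a (x - x0) (phi x).

Definition Z_periodic (phi : R -> R) : Prop := forall x, phi (x + 1) = phi x.

(* Digit sequences: s k encodes j_{k+1}, so Sigma = {0..b-1}^{Z_+}. *)
Definition in_Sigma (b : nat) (s : nat -> nat) : Prop := forall k, (s k < b)%nat.

(* The argument  x/b^n + j_1/b^n + ... + j_n/b  for n = m+1 *)
Definition arg_n (b : nat) (s : nat -> nat) (x : R) (m : nat) : R :=
  x / INR b ^ (S m) + sum_f_R0 (fun k => INR (s k) / INR b ^ (S m - k)) m.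

Definition Yfun (b : nat) (lambda : R) (phi : R -> R) (x : R) (s : nat -> nat) : R :=
  - Series (fun m => (/ (INR b * lambda)) ^ (S m) * Derive phi (arg_n b s x m)).

Definition Gammafun (b : nat) (lambda : R) (phi : R -> R) (s : nat -> nat) (x : R) : R :=
  RInt (fun t => Yfun b lambda phi t s) 0 x.

Definition cond_H (b : nat) (lambda : R) (phi : R -> R) : Prop :=
  forall i j : nat -> nat, in_Sigma b i -> in_Sigma b j -> i <> j ->
    exists x, Yfun b lambda phi x j - Yfun b lambda phi x i <> 0.

Definition in_F1 (b : nat) (lambda : R) (phi : R -> R) (f : R -> R) : Prop :=
  exists u v : nat -> nat, in_Sigma b u /\ in_Sigma b v /\ u 0%nat <> v 0%nat /\
    forall x, f x = Gammafun b lambda phi u x - Gammafun b lambda phi v x.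

(* Main.v *)
Require Import Defs.
From Stdlib Require Import Reals.
From Coquelicot Require Import Coquelicot.
From Stdlib Require Import Lra Lia ZArith Ranalysis5 ClassicalEpsilon Classical.
Open Scope R_scope.


Lemma fin_max (Q : nat -> nat -> Prop) (n : nat) :
  (forall d, (d < n)%nat -> exists m0, forall m, (m0 <= m)%nat -> Q d m) ->
  exists M, forall d, (d < n)%nat -> forall m, (M <= m)%nat -> Q d m.
Proof.
  induction n as [|n IH]; intros H.
  - exists 0%nat; intros; lia.
  - destruct IH as [M1 HM1]. { intros d Hd; apply H; lia. }
    destruct (H n) as [M2 HM2]; [lia|].
    exists (Nat.max M1 M2); intros d Hd m Hm.
    destruct (Nat.eq_dec d n) as [->|Hne].
    + apply HM2; lia.
    + apply HM1; lia.
Qed.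

Definition upd (U : nat -> nat) (n d : nat) : nat -> nat :=
  fun k => if Nat.eq_dec k n then d else U k.

Section Compact.
Variable b : nat.
Hypothesis hb : (0 < b)%nat.
Variable S : nat -> (nat -> nat) -> (nat -> nat) -> R -> Prop.
Hypothesis Snest : forall m m' u v x, (m <= m')%nat -> S m' u v x -> S m u v x.
Hypothesis Sne : forall m, exists u v x, in_Sigma b u /\ in_Sigma b v /\ 0 <= x <= 1 /\ S m u v x.

Definition State := ((nat -> nat) * (nat -> nat) * R)%type.
Definition sU (st : State) := fst (fst st).
Definition sV (st : State) := snd (fst st).
Definition sa (st : State) := snd st.

Definition Pt m n (st : State) :=
  exists u v x, in_Sigma b u /\ in_Sigma b v /\ 0 <= x <= 1 /\ S m u v x /\
    (forall k, (k < n)%nat -> u k = sU st k /\ v k = sV st k) /\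
    sa st <= x <= sa st + (/2)^n.

Definition Good n st := forall m, Pt m n st.

Definition child n (st st' : State) :=
  (forall k, k <> n -> sU st' k = sU st k /\ sV st' k = sV st k) /\
  (sU st' n < b)%nat /\ (sV st' n < b)%nat /\
  (sa st' = sa st \/ sa st' = sa st + (/2)^(Datatypes.S n)).

Lemma Pt_mono m m' n st : (m <= m')%nat -> Pt m' n st -> Pt m n st.
Proof.
  intros Hm (u & v & x & H1 & H2 & H3 & H4 & H5 & H6).
  exists u, v, x; repeat split; try tauto; eauto.
  all: apply H5; auto.
Qed.

Lemma step_ex n st : Good n st -> exists st', child n st st' /\ Good (Datatypes.S n) st'.
Proof.
  intros HG. apply NNPP; intros Hn.
  set (ch := fun d e h : nat => (upd (sU st) n d, upd (sV st) n e,
                                  sa st + INR h * (/2)^(Datatypes.S n)) : State).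
  assert (Hbad : forall d e h, (d < b)%nat -> (e < b)%nat -> (h < 2)%nat ->
            exists m0, forall m, (m0 <= m)%nat -> ~ Pt m (Datatypes.S n) (ch d e h)).
  { intros d e h Hd He Hh.
    assert (~ Good (Datatypes.S n) (ch d e h)).
    { intros HG'. apply Hn. exists (ch d e h); split; auto.
      unfold child, ch, sU, sV, sa, upd; simpl. repeat split.
      - destruct (Nat.eq_dec k n); [congruence|auto].
      - destruct (Nat.eq_dec k n); [congruence|auto].
      - destruct (Nat.eq_dec n n); [auto|congruence].
      - destruct (Nat.eq_dec n n); [auto|congruence].
      - destruct h as [|[|h]]; [left; simpl; ring | right; simpl; ring | lia]. }
    apply not_all_ex_not in H as [m0 Hm0]. exists m0.
    intros m Hm HP. apply Hm0. eapply Pt_mono; eauto. }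
  destruct (fin_max (fun d m => forall e h, (e < b)%nat -> (h < 2)%nat ->
                        ~ Pt m (Datatypes.S n) (ch d e h)) b) as [M HM].
  { intros d Hd.
    destruct (fin_max (fun e m => forall h, (h < 2)%nat -> ~ Pt m (Datatypes.S n) (ch d e h)) b)
      as [M1 HM1].
    { intros e He.
      destruct (fin_max (fun h m => ~ Pt m (Datatypes.S n) (ch d e h)) 2) as [M2 HM2].
      { intros h Hh; apply Hbad; auto. }
      exists M2; intros m Hm h Hh; apply HM2; auto. }
    exists M1; intros m Hm e h He Hh; apply HM1; auto. }
  destruct (HG M) as (u & v & x & Hu & Hv & Hx & HS & Hpre & Hint).
  set (h := if Rle_dec (sa st + (/2)^(Datatypes.S n)) x then 1%nat else 0%nat).
  apply (HM (u n) (Hu n) M (le_n _) (v n) h (Hv n)).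
  { unfold h; destruct Rle_dec; lia. }
  red; exists u, v, x; repeat split; try tauto.
  - unfold ch, sU, upd; simpl.
    destruct (Nat.eq_dec k n) as [->|]; auto. apply Hpre; lia.
  - unfold ch, sV, upd; simpl.
    destruct (Nat.eq_dec k n) as [->|]; auto. apply Hpre; lia.
  - unfold ch, sa, h in *; simpl in *. destruct Rle_dec as [Hr|Hr]; [|apply Rnot_le_lt in Hr]; simpl; lra.
  - unfold ch, sa, h in *; simpl in *. destruct Rle_dec as [Hr|Hr]; [|apply Rnot_le_lt in Hr]; simpl; lra.
Qed.

Definition stepf n (st : State) : State :=
  epsilon (inhabits st) (fun st' => child n st st' /\ Good (Datatypes.S n) st').

Fixpoint stseq n : State :=
  match n with
  | O => (fun _ => 0%nat, fun _ => 0%nat, 0)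
  | Datatypes.S n => stepf n (stseq n)
  end.

Lemma stseq_good n : Good n (stseq n).
Proof.
  induction n as [|n IH].
  - intros m. destruct (Sne m) as (u & v & x & H1 & H2 & H3 & H4).
    exists u, v, x; repeat split; auto; try lia; unfold sa; simpl; lra.
  - simpl. unfold stepf. apply (epsilon_spec (inhabits (stseq n))
      (fun st' => child n (stseq n) st' /\ Good (Datatypes.S n) st')).
    now apply step_ex.
Qed.

Lemma stseq_child n : child n (stseq n) (stseq (Datatypes.S n)).
Proof.
  simpl. unfold stepf. apply (epsilon_spec (inhabits (stseq n))
      (fun st' => child n (stseq n) st' /\ Good (Datatypes.S n) st')).
  apply step_ex, stseq_good.
Qed.

Definition ustar k := sU (stseq (Datatypes.S k)) k.
Definition vstar k := sV (stseq (Datatypes.S k)) k.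
Definition aseq n := sa (stseq n).

Lemma prefix_star n k : (k < n)%nat -> sU (stseq n) k = ustar k /\ sV (stseq n) k = vstar k.
Proof.
  induction n as [|n IH]; intros Hk; [lia|].
  destruct (Nat.eq_dec k n) as [->|Hne]; [split; reflexivity|].
  destruct (stseq_child n) as [Hc _]. destruct (Hc k Hne) as [E1 E2].
  rewrite E1, E2. apply IH; lia.
Qed.

Lemma aseq_step n : aseq n <= aseq (Datatypes.S n) /\
   aseq (Datatypes.S n) + (/2)^(Datatypes.S n) <= aseq n + (/2)^n.
Proof.
  destruct (stseq_child n) as (_ & _ & _ & Ha). unfold aseq.
  destruct Ha as [E|E]; rewrite E; simpl; split;
   pose proof (pow_lt (/2) n ltac:(lra)); lra.
Qed.

Lemma aseq_mono n p : aseq n <= aseq (n + p) /\ aseq (n+p) + (/2)^(n+p) <= aseq n + (/2)^n.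
Proof.
  induction p as [|p IH].
  - rewrite Nat.add_0_r; lra.
  - rewrite Nat.add_succ_r. pose proof (aseq_step (n + p)). lra.
Qed.

Lemma aseq_ub n m : aseq m <= aseq n + (/2)^n.
Proof.
  destruct (Compare_dec.le_lt_dec n m) as [H|H].
  - replace m with (n + (m - n))%nat by lia.
    pose proof (aseq_mono n (m - n)). pose proof (pow_lt (/2) (n + (m-n)) ltac:(lra)). lra.
  - replace n with (m + (n - m))%nat by lia.
    pose proof (aseq_mono m (n - m)). pose proof (pow_lt (/2) (m + (n-m)) ltac:(lra)). lra.
Qed.

Lemma compact_main : exists u v x, in_Sigma b u /\ in_Sigma b v /\ 0 <= x <= 1 /\
  forall m n, exists u' v' x', in_Sigma b u' /\ in_Sigma b v' /\ 0 <= x' <= 1 /\ S m u' v' x' /\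
     (forall k, (k < n)%nat -> u' k = u k /\ v' k = v k) /\ Rabs (x' - x) <= (/2)^n.
Proof.
  destruct (completeness (fun y => exists n, y = aseq n)) as [xs [Hub Hlub]].
  { exists (aseq 0 + (/2)^0). intros y [n ->]. apply aseq_ub. }
  { exists (aseq 0); exists 0%nat; auto. }
  assert (Hle : forall n, aseq n <= xs) by (intros n; apply Hub; eauto).
  assert (Hge : forall n, xs <= aseq n + (/2)^n).
  { intros n; apply Hlub. intros y [m ->]. apply aseq_ub. }
  assert (a0 : aseq 0 = 0) by reflexivity.
  exists ustar, vstar, xs. repeat split.
  - intros k. destruct (stseq_child k) as (_ & H & _ & _). exact H.
  - intros k. destruct (stseq_child k) as (_ & _ & H & _). exact H.
  - specialize (Hle 0%nat); lra.
  - specialize (Hge 0%nat); simpl in Hge; lra.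
  - intros m n. destruct (stseq_good n m) as (u & v & x & H1 & H2 & H3 & H4 & H5 & H6).
    exists u, v, x; repeat split; try tauto.
    + destruct (H5 k) as [E _]; [assumption|]. rewrite E. apply prefix_star; auto.
    + destruct (H5 k) as [_ E]; [assumption|]. rewrite E. apply prefix_star; auto.
    + specialize (Hle n); specialize (Hge n). unfold aseq in *.
      apply Rabs_le; lra.
Qed.

End Compact.

Lemma loc_of (y eps : R) (P : R -> Prop) : 0 < eps ->
  (forall t, Rabs (t - y) < eps -> P t) -> locally y P.
Proof. intros He H. exists (mkposreal eps He). intros t Ht. apply H. exact Ht. Qed.

Lemma nat_arch (x : R) : exists n : nat, x < INR n.
Proof.
  destruct (archimed x) as [H1 _].
  destruct (Z_le_gt_dec 0 (up x)) as [Hz|Hz].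
  - exists (Z.to_nat (up x)). rewrite INR_IZR_INZ, Z2Nat.id; auto.
  - exists 0%nat. assert (Hz2 : (up x < 0)%Z) by lia. apply IZR_lt in Hz2. simpl. lra.
Qed.

Lemma fact_binom_nat s : forall n k, (n + k = s)%nat ->
  (fact (n + k) <= 2 ^ (n + k) * fact n * fact k)%nat.
Proof.
  induction s as [|s IH]; intros n k Hs.
  - assert (n = 0 /\ k = 0)%nat as [-> ->] by lia. simpl. lia.
  - destruct n as [|n'].
    + simpl. pose proof (Nat.pow_le_mono_r 2 0 k ltac:(lia) ltac:(lia)). rewrite Nat.pow_0_r in H. nia.
    + destruct k as [|k'].
      * rewrite Nat.add_0_r. simpl fact at 3.
        pose proof (Nat.pow_le_mono_r 2 0 (S n') ltac:(lia) ltac:(lia)). rewrite Nat.pow_0_r in H. nia.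
      * assert (H1 := IH n' (S k') ltac:(lia)).
        assert (H2 := IH (S n') k' ltac:(lia)).
        replace (S n' + S k')%nat with (S (n' + S k')) by lia.
        replace (S n' + k')%nat with (n' + S k')%nat in H2 by lia.
        rewrite Nat.pow_succ_r'.
        change (fact (S (n' + S k'))) with (S (n' + S k') * fact (n' + S k'))%nat.
        change (fact (S n')) with (S n' * fact n')%nat.
        change (fact (S n')) with (S n' * fact n')%nat in H2.
        change (fact (S k')) with (S k' * fact k')%nat.
        change (fact (S k')) with (S k' * fact k')%nat in H1.
        set (F := fact (n' + S k')) in *. set (P := (2 ^ (n' + S k'))%nat) in *.
        assert (E : (S (n' + S k') = S n' + S k')%nat) by lia. rewrite E.
        nia.
Qed.

Lemma fact_binom n k :
  INR (fact (n + k)) <= 2 ^ (n + k) * INR (fact n) * INR (fact k).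
Proof.
  pose proof (fact_binom_nat (n + k) n k eq_refl) as H.
  apply le_INR in H. rewrite !mult_INR, pow_INR in H. simpl in H. exact H.
Qed.

Lemma lim0_bounded (u : nat -> R) : is_lim_seq u 0 -> exists M, forall n, Rabs (u n) <= M.
Proof.
  intros H. apply is_lim_seq_Reals in H.
  destruct (H 1 Rlt_0_1) as [N HN].
  exists (1 + sum_f_R0 (fun k => Rabs (u k)) N). intros n.
  assert (Hs : forall m, 0 <= sum_f_R0 (fun k => Rabs (u k)) m).
  { intros m; apply cond_pos_sum; intros; apply Rabs_pos. }
  destruct (Compare_dec.le_lt_dec n N) as [Hn|Hn].
  - assert (forall m, (n <= m)%nat -> Rabs (u n) <= sum_f_R0 (fun k => Rabs (u k)) m).
    { induction m as [|m IHm]; intros Hm.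
      - assert (n = 0%nat) by lia. subst; simpl; lra.
      - destruct (Nat.eq_dec n (S m)) as [->|Hne].
        + simpl. specialize (Hs m). lra.
        + simpl. specialize (IHm ltac:(lia)). pose proof (Rabs_pos (u (S m))). lra. }
    specialize (H0 N Hn). lra.
  - specialize (HN n ltac:(lia)). unfold R_dist in HN. rewrite Rminus_0_r in HN.
    specialize (Hs N). lra.
Qed.

Section Phi.
Variable phi : R -> R.
Hypothesis Han : real_analytic phi.
Hypothesis Hper : Z_periodic phi.

Lemma phi_local (x0 : R) : exists a rho M, 0 < rho /\ 0 <= M /\
   Rbar_le rho (CV_radius a) /\
   (forall n, Rabs (a n) * rho ^ n <= M) /\
   (forall k y, Rabs (y - x0) < rho -> Derive_n phi k y = PSeries (PS_derive_n k a) (y - x0)).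
Proof.
  destruct (Han x0) as (a & r & Hr & Hps).
  set (rho := r / 2).
  assert (Hex : ex_series (fun n => scal (pow_n rho n) (a n))).
  { assert (H : Rabs ((x0 + rho) - x0) < r).
    { replace (x0 + rho - x0) with rho by ring. unfold rho. rewrite Rabs_pos_eq; lra. }
    apply Hps in H. replace (x0 + rho - x0) with rho in H by ring.
    exists (phi (x0 + rho)). exact H. }
  destruct (lim0_bounded _ (ex_series_lim_0 _ Hex)) as [M HM].
  assert (HM' : forall n, Rabs (a n) * rho ^ n <= M).
  { intros n. specialize (HM n). rewrite pow_n_pow in HM. unfold scal in HM; simpl in HM.
    unfold mult in HM; simpl in HM. rewrite Rabs_mult, (Rabs_pos_eq (rho ^ n)) in HM.
    - lra.
    - apply pow_le; unfold rho; lra. }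
  assert (Hrad : Rbar_le rho (CV_radius a)).
  { apply (proj1 (CV_radius_bounded a)). exists M. intros n.
    rewrite Rabs_mult, (Rabs_pos_eq (rho ^ n)); [apply HM'|apply pow_le; unfold rho; lra]. }
  exists a, rho, M. repeat split; auto.
  - unfold rho; lra.
  - specialize (HM' 0%nat). pose proof (Rabs_pos (a 0%nat)). simpl in HM'. lra.
  - intros k y Hy.
    rewrite (Derive_n_ext_loc phi (fun t => PSeries a (t + - x0))).
    + rewrite Derive_n_comp_trans. apply Derive_n_PSeries.
      eapply Rbar_lt_le_trans; [|exact Hrad]. simpl. exact Hy.
    + apply (loc_of y (rho - Rabs (y - x0))); [lra|].
      intros t Ht. symmetry. apply is_pseries_unique. apply Hps.
      pose proof (Rabs_triang (t - y) (y - x0)).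
      replace (t - y + (y - x0)) with (t - x0) in H by ring.
      unfold rho in *. lra.
Qed.

Lemma phi_smooth k y : ex_derive (Derive_n phi k) y.
Proof.
  destruct (phi_local y) as (a & rho & M & Hrho & HM & Hrad & Hb & Hrep).
  apply (ex_derive_ext_loc (fun t => PSeries (PS_derive_n k a) (t + - y))).
  - apply (loc_of y rho); [exact Hrho|]. intros t Ht. now rewrite Hrep.
  - apply (ex_derive_comp (PSeries (PS_derive_n k a)) (fun t => t + - y)).
    + apply ex_derive_PSeries. rewrite CV_radius_derive_n.
      replace (y + - y) with 0 by ring. rewrite Rabs_R0.
      eapply Rbar_lt_le_trans; [|exact Hrad]. simpl. exact Hrho.
    + auto_derive; auto.
Qed.

Lemma phi_deriv k y : is_derive (Derive_n phi k) y (Derive_n phi (S k) y).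
Proof. apply Derive_correct, phi_smooth. Qed.

Lemma phi_cont k y : continuous (Derive_n phi k) y.
Proof. apply (ex_derive_continuous (K := R_AbsRing) (V := R_NormedModule)), phi_smooth. Qed.

Lemma phi_local_bound (x0 : R) : exists delta A L, 0 < delta /\ 0 <= A /\ 0 <= L /\
  forall y, Rabs (y - x0) < delta -> forall k, Rabs (Derive_n phi k y) <= A * INR (fact k) * L ^ k.
Proof.
  destruct (phi_local x0) as (a & rho & M & Hrho & HM & Hrad & Hb & Hrep).
  exists (rho / 4), (2 * M), (2 / rho). repeat split; try lra.
  { apply Rlt_le, Rdiv_lt_0_compat; lra. }
  intros y Hy k. rewrite Hrep by lra. unfold PSeries.
  set (z := y - x0) in *.
  assert (Hz : Rbar_lt (Rabs z) (CV_radius (PS_derive_n k a))).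
  { rewrite CV_radius_derive_n. eapply Rbar_lt_le_trans; [|exact Hrad]. simpl. lra. }
  eapply Rle_trans. { apply Series_Rabs. apply CV_disk_inside; auto. }
  assert (Hterm : forall n, 0 <= Rabs (PS_derive_n k a n * z ^ n) <=
      (M * INR (fact k) * (2 / rho) ^ k) * (/2) ^ n).
  { intros n. split; [apply Rabs_pos|].
    unfold PS_derive_n. rewrite !Rabs_mult, <- RPow_abs.
    rewrite (Rabs_pos_eq (INR (fact (n + k)) / INR (fact n))).
    2: { apply Rlt_le, Rdiv_lt_0_compat; apply lt_0_INR, lt_O_fact. }
    pose proof (Hb (n + k)%nat) as Hbn.
    pose proof (fact_binom n k) as Hf.
    pose proof (lt_0_INR _ (lt_O_fact n)) as Hfn.
    pose proof (lt_0_INR _ (lt_O_fact k)) as Hfk.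
    assert (Hzn : Rabs z ^ n <= (rho / 4) ^ n) by (apply pow_incr; split; [apply Rabs_pos|lra]).
    assert (Hrn : 0 < rho ^ (n + k)) by (apply pow_lt; lra).
    assert (Ha : Rabs (a (n + k)%nat) <= M / rho ^ (n + k)).
    { apply Rle_div_r; auto. }
    assert (Hpa : 0 <= Rabs (a (n + k)%nat)) by apply Rabs_pos.
    assert (Hpz : 0 <= Rabs z ^ n) by (apply pow_le, Rabs_pos).
    apply Rle_trans with (INR (fact (n + k)) / INR (fact n) * (M / rho ^ (n + k)) * (rho / 4) ^ n).
    { apply Rmult_le_compat; try nra.
      - apply Rmult_le_pos; [apply Rlt_le, Rdiv_lt_0_compat; auto; apply lt_0_INR, lt_O_fact|auto].
      - apply Rmult_le_compat_l; auto. apply Rlt_le, Rdiv_lt_0_compat; auto; apply lt_0_INR, lt_O_fact. }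
    assert (E1 : (rho / 4) ^ n = rho ^ n * ((/2) ^ n * (/2) ^ n)).
    { rewrite <- Rpow_mult_distr, <- Rpow_mult_distr. f_equal. field. }
    assert (E2 : (2 / rho) ^ k = 2 ^ k * / rho ^ k).
    { unfold Rdiv. rewrite Rpow_mult_distr, pow_inv. reflexivity. }
    assert (E3 : 2 ^ n * (/2) ^ n = 1).
    { rewrite <- Rpow_mult_distr. replace (2 * /2) with 1 by field. apply pow1. }
    rewrite E1, E2, pow_add. rewrite pow_add in Hf.
    assert (0 < rho ^ n) by (apply pow_lt; lra).
    assert (0 < rho ^ k) by (apply pow_lt; lra).
    assert (0 < (/2) ^ n) by (apply pow_lt; lra).
    apply Rle_trans with ((2 ^ n * 2 ^ k * INR (fact n) * INR (fact k)) / INR (fact n) *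
       (M / (rho ^ n * rho ^ k)) * (rho ^ n * ((/2) ^ n * (/2) ^ n))).
    { apply Rmult_le_compat_r; [apply Rmult_le_pos; [lra|apply Rmult_le_pos; lra]|].
      apply Rmult_le_compat_r; [apply Rmult_le_pos; [lra|apply Rlt_le, Rinv_0_lt_compat; nra]|].
      unfold Rdiv. apply Rmult_le_compat_r; [apply Rlt_le, Rinv_0_lt_compat; lra|lra]. }
    apply Req_le. 
    replace (2 ^ n * 2 ^ k * INR (fact n) * INR (fact k) / INR (fact n) *
      (M / (rho ^ n * rho ^ k)) * (rho ^ n * ((/ 2) ^ n * (/ 2) ^ n)))
      with ((2 ^ n * (/2) ^ n) * (2 ^ k * INR (fact k) * M / rho ^ k * (/2)^n)) by (field; lra).
    rewrite E3. field. lra. }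
  eapply Rle_trans. { apply Series_le; [exact Hterm|].
    set (c := M * INR (fact k) * (2 / rho) ^ k).
    exists (c * /(1 - /2)).
    apply (is_series_scal_l c (fun n => (/2)^n) (/(1 - /2))). apply is_series_geom.
    rewrite Rabs_pos_eq; lra. }
  rewrite Series_scal_l, Series_geom by (rewrite Rabs_pos_eq; lra).
  apply Req_le. field.
Qed.
End Phi.

Lemma mono_bound A L m f k : 0 <= A <= m -> 0 <= L <= m -> 0 < f ->
  A * f * L ^ k <= m * f * m ^ k.
Proof.
  intros HA HL Hf.
  assert (0 <= L ^ k) by (apply pow_le; lra).
  assert (L ^ k <= m ^ k) by (apply pow_incr; lra).
  apply Rmult_le_compat; try nra.
Qed.

Section Phi2.
Variable phi : R -> R.
Hypothesis Han : real_analytic phi.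
Hypothesis Hper : Z_periodic phi.

Lemma phi_bound01 : exists A L, 0 <= A /\ 0 <= L /\ forall y, 0 <= y <= 1 ->
   forall k, Rabs (Derive_n phi k y) <= A * INR (fact k) * L ^ k.
Proof.
  apply NNPP; intros Hn.
  set (S := fun (m:nat) (u v : nat -> nat) (y : R) =>
     exists k, INR m * INR (fact k) * INR m ^ k < Rabs (Derive_n phi k y)).
  assert (Snest : forall m m' u v x, (m <= m')%nat -> S m' u v x -> S m u v x).
  { intros m m' u v y Hm [k Hk]. exists k. eapply Rle_lt_trans; [|exact Hk].
    apply le_INR in Hm. pose proof (pos_INR m). pose proof (lt_0_INR _ (lt_O_fact k)).
    apply mono_bound; lra. }
  assert (Sne : forall m, exists u v x, in_Sigma 1 u /\ in_Sigma 1 v /\ 0 <= x <= 1 /\ S m u v x).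
  { intros m. apply NNPP; intro H. apply Hn. exists (INR m), (INR m).
    split; [apply pos_INR|]; split; [apply pos_INR|]. intros y Hy k. apply Rnot_lt_le. intros Hlt.
    apply H. exists (fun _ => 0%nat), (fun _ => 0%nat), y.
    repeat split; try lra; try (intros ?; lia). exists k; exact Hlt. }
  destruct (compact_main 1 ltac:(lia) S Snest Sne) as (u & v & ys & _ & _ & Hys & Happ).
  destruct (phi_local_bound phi Han ys) as (delta & A & L & Hd & HA & HL & Hb).
  destruct (nat_arch (Rmax A L)) as [m Hm].
  destruct (pow_lt_1_zero (/2) ltac:(rewrite Rabs_pos_eq; lra) delta Hd) as [N HN].
  destruct (Happ m N) as (u' & v' & y' & _ & _ & _ & [k Hk] & _ & Hy').
  specialize (HN N (le_n _)). rewrite Rabs_pos_eq in HN by (apply pow_le; lra).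
  specialize (Hb y' ltac:(lra) k).
  assert (HAm : A <= INR m) by (pose proof (Rmax_l A L); lra).
  assert (HLm : L <= INR m) by (pose proof (Rmax_r A L); lra).
  pose proof (lt_0_INR _ (lt_O_fact k)).
  assert (A * INR (fact k) * L ^ k <= INR m * INR (fact k) * INR m ^ k).
  { apply mono_bound; lra. }
  lra.
Qed.

Lemma phiD_per1 k y : Derive_n phi k (y + 1) = Derive_n phi k y.
Proof.
  rewrite <- Derive_n_comp_trans. apply Derive_n_ext. intros t. apply Hper.
Qed.

Lemma phiD_perN k y (n : nat) : Derive_n phi k (y + INR n) = Derive_n phi k y.
Proof.
  induction n as [|n IH].
  - simpl; now rewrite Rplus_0_r.
  - rewrite S_INR, <- Rplus_assoc, phiD_per1. exact IH.
Qed.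

Lemma phiD_perZ k y (z : Z) : Derive_n phi k (y + IZR z) = Derive_n phi k y.
Proof.
  destruct (Z_le_gt_dec 0 z) as [Hz|Hz].
  - replace (IZR z) with (INR (Z.to_nat z)) by (rewrite INR_IZR_INZ, Z2Nat.id; auto).
    apply phiD_perN.
  - replace z with (- Z.of_nat (Z.to_nat (- z)))%Z by lia.
    rewrite opp_IZR, <- INR_IZR_INZ.
    rewrite <- (phiD_perN k (y + - INR (Z.to_nat (- z))) (Z.to_nat (- z))).
    f_equal. ring.
Qed.

Lemma phi_bound : exists A L, 0 <= A /\ 0 <= L /\ forall y k,
   Rabs (Derive_n phi k y) <= A * INR (fact k) * L ^ k.
Proof.
  destruct phi_bound01 as (A & L & HA & HL & H). exists A, L; repeat split; auto.
  intros y k. replace y with (frac_part y + IZR (Int_part y)) by (unfold frac_part; ring).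
  rewrite phiD_perZ. apply H. destruct (base_fp y). lra.
Qed.

End Phi2.

Lemma geom_is (M q : R) : 0 <= q < 1 -> is_series (fun m => M * q ^ m) (M / (1 - q)).
Proof.
  intros Hq. apply (is_series_scal_l M (fun n => q ^ n) (/(1 - q))).
  apply is_series_geom. rewrite Rabs_pos_eq; lra.
Qed.

Lemma dom_ex (a : nat -> R) M q : 0 <= q < 1 -> (forall m, Rabs (a m) <= M * q ^ m) -> ex_series a.
Proof.
  intros Hq H. apply (ex_series_le a (fun m => M * q ^ m)).
  - intros n. apply H.
  - eexists; apply geom_is; auto.
Qed.

Lemma dom_bound (a : nat -> R) M q : 0 <= q < 1 -> (forall m, Rabs (a m) <= M * q ^ m) ->
  Rabs (Series a) <= M / (1 - q).
Proof.
  intros Hq H. eapply Rle_trans.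
  - apply Series_Rabs. apply (dom_ex _ M q); auto. intros m. rewrite Rabs_Rabsolu. apply H.
  - rewrite <- (is_series_unique _ _ (geom_is M q Hq)). apply Series_le.
    + intros n; split; [apply Rabs_pos|apply H].
    + eexists; apply geom_is; auto.
Qed.

Lemma dom_tail (a : nat -> R) M q n : 0 <= q < 1 -> (forall m, Rabs (a m) <= M * q ^ m) ->
  Rabs (Series a - sum_f_R0 a n) <= M * q ^ (S n) / (1 - q).
Proof.
  intros Hq H. rewrite (Series_incr_n a (S n)); [|lia|apply (dom_ex _ M q); auto].
  simpl pred. replace (sum_f_R0 a n + Series (fun k => a (S n + k)%nat) - sum_f_R0 a n)
    with (Series (fun k => a (S n + k)%nat)) by ring.
  apply (dom_bound _ (M * q ^ S n)); auto.
  intros m. rewrite Rmult_assoc, <- pow_add. apply H.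
Qed.

Lemma Un_cv_series (a : nat -> R) : ex_series a -> Un_cv (sum_f_R0 a) (Series a).
Proof.
  intros H. apply is_lim_seq_Reals. apply Series_correct in H.
  apply (is_lim_seq_ext (sum_n a)); [intros; apply sum_n_Reals|exact H].
Qed.

Lemma series_deriv (t t' : nat -> R -> R) (q M M' : R) : 0 <= q < 1 ->
  (forall m y, Rabs (t m y) <= M * q ^ m) ->
  (forall m y, Rabs (t' m y) <= M' * q ^ m) ->
  (forall m y, is_derive (t m) y (t' m y)) ->
  (forall m y, continuity_pt (t' m) y) ->
  forall x, is_derive (fun y => Series (fun m => t m y)) x (Series (fun m => t' m x)) /\
            continuity_pt (fun y => Series (fun m => t' m y)) x.
Proof.
  intros Hq Ht Ht' Hd Hc x.
  set (r := mkposreal 1 Rlt_0_1).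
  assert (HCVU' : forall c r, CVU (fun n y => sum_f_R0 (fun m => t' m y) n)
                     (fun y => Series (fun m => t' m y)) c r).
  { intros c rr eps Heps.
    assert (HM' : 0 <= M') by (specialize (Ht' 0%nat x); simpl in Ht'; pose proof (Rabs_pos (t' 0%nat x)); lra).
    destruct (Req_dec q 0) as [Hq0|Hq0].
    - exists 0%nat. intros n y _ _. eapply Rle_lt_trans; [apply (dom_tail _ M' q); auto|].
      rewrite Hq0. simpl. rewrite Rmult_0_l, Rmult_0_r. unfold Rdiv; rewrite Rmult_0_l; lra.
    - destruct (pow_lt_1_zero q ltac:(rewrite Rabs_pos_eq; lra) (eps * (1 - q) / (M' + 1)))
        as [N HN].
      { apply Rdiv_lt_0_compat; [apply Rmult_lt_0_compat|]; lra. }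
      exists N. intros n y Hn _. eapply Rle_lt_trans; [apply (dom_tail _ M' q); auto|].
      specialize (HN (S n) ltac:(lia)). rewrite Rabs_pos_eq in HN by (apply pow_le; lra).
      apply Rlt_le_trans with ((M' + 1) * q ^ S n / (1 - q)).
      + unfold Rdiv. apply Rmult_lt_compat_r; [apply Rinv_0_lt_compat; lra|].
        assert (0 < q ^ S n) by (apply pow_lt; lra). nra.
      + apply (Rmult_le_reg_r (1 - q)); [lra|]. unfold Rdiv. rewrite Rmult_assoc, Rinv_l by lra.
        apply (Rmult_le_reg_l (/ (M' + 1))); [apply Rinv_0_lt_compat; lra|].
        rewrite Rmult_1_r, <- Rmult_assoc, Rinv_l by lra. rewrite Rmult_1_l.
        unfold Rdiv in HN. lra. }
  assert (HCVU := HCVU' x r).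
  assert (Hcont : forall y, continuity_pt (fun y => Series (fun m => t' m y)) y).
  { intros y.
    apply (CVU_continuity (fun n y => sum_f_R0 (fun m => t' m y) n) _ y r).
    - apply HCVU'.
    - intros n z _. induction n as [|n IH].
      + simpl. apply Hc.
      + simpl. apply continuity_pt_plus; auto.
    - unfold Boule. rewrite Rminus_eq_0, Rabs_R0. simpl. lra. }
  split; [|apply Hcont].
  apply is_derive_Reals.
  apply (derivable_pt_lim_CVU (fun n y => sum_f_R0 (fun m => t m y) n)
           (fun n y => sum_f_R0 (fun m => t' m y) n) (fun y => Series (fun m => t m y))
           (fun y => Series (fun m => t' m y)) x x r).
  - unfold Boule; rewrite Rminus_eq_0, Rabs_R0; simpl; lra.
  - intros y n _. induction n as [|n IH].
    + simpl. apply is_derive_Reals, Hd.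
    + simpl. apply (derivable_pt_lim_plus (fun y => sum_f_R0 (fun m => t m y) n) (t (S n))); auto.
      apply is_derive_Reals, Hd.
  - intros y _. apply Un_cv_series. apply (dom_ex _ M q); auto.
  - exact HCVU.
  - intros y _. apply Hcont.
Qed.

Definition gam (b : nat) (lambda : R) := / (INR b * lambda).

Definition Dterm b lambda phi k s x m :=
  gam b lambda ^ (S m) * (/ INR b ^ S m) ^ k * Derive_n phi (S k) (arg_n b s x m).

Definition Dn b lambda phi k s x := - Series (fun m => Dterm b lambda phi k s x m).

Lemma Yfun_Dn0 b lambda phi x s : Yfun b lambda phi x s = Dn b lambda phi 0 s x.
Proof.
  unfold Yfun, Dn. f_equal. apply Series_ext. intros m. unfold Dterm, gam. rewrite pow_O, Rmult_1_r. reflexivity.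
Qed.

Section Ysec.
Variable b : nat.
Variable lambda : R.
Variable phi : R -> R.
Hypothesis hb : (2 <= b)%nat.
Hypothesis hl1 : / INR b < lambda.
Hypothesis hl2 : lambda < 1.
Variables A L : R.
Hypothesis HA : 0 <= A.
Hypothesis HL : 0 <= L.
Hypothesis Hbound : forall y k, Rabs (Derive_n phi k y) <= A * INR (fact k) * L ^ k.
Hypothesis Hsmooth : forall k y, is_derive (Derive_n phi k) y (Derive_n phi (S k) y).

Lemma INRb_ge2 : 2 <= INR b.
Proof. apply le_INR in hb. simpl in hb. lra. Qed.

Lemma gam_pos : 0 < gam b lambda.
Proof.
  pose proof INRb_ge2. unfold gam. apply Rinv_0_lt_compat.
  assert (0 < / INR b) by (apply Rinv_0_lt_compat; lra). nra.
Qed.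

Lemma gam_lt1 : gam b lambda < 1.
Proof.
  pose proof INRb_ge2. unfold gam.
  assert (1 < INR b * lambda).
  { apply (Rmult_lt_compat_l (INR b)) in hl1; [|lra]. rewrite Rinv_r in hl1 by lra. lra. }
  rewrite <- Rinv_1. apply Rinv_lt_contravar; lra.
Qed.

Lemma pow_le1 x n : 0 <= x <= 1 -> x ^ n <= 1.
Proof.
  intros Hx. induction n as [|n IH]; simpl; [lra|].
  assert (0 <= x ^ n) by (apply pow_le; lra). nra.
Qed.

Lemma invb_pow_bounds m : 0 < / INR b ^ m <= 1.
Proof.
  pose proof INRb_ge2. split.
  - apply Rinv_0_lt_compat, pow_lt; lra.
  - rewrite <- Rinv_1. apply Rinv_le_contravar; [lra|]. apply pow_R1_Rle. lra.
Qed.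

Definition Mk k := A * INR (fact (S k)) * L ^ (S k) * gam b lambda.

Lemma Mk_nonneg k : 0 <= Mk k.
Proof.
  unfold Mk. pose proof gam_pos. pose proof (pos_INR (fact (S k))).
  pose proof (pow_le L (S k) HL).
  apply Rmult_le_pos; [|lra]. apply Rmult_le_pos; [|lra]. apply Rmult_le_pos; lra.
Qed.

Lemma Dterm_bound k s x m : Rabs (Dterm b lambda phi k s x m) <= Mk k * gam b lambda ^ m.
Proof.
  unfold Dterm, Mk. pose proof gam_pos.
  pose proof (invb_pow_bounds (S m)) as [H1 H2].
  rewrite !Rabs_mult. rewrite (Rabs_pos_eq (gam b lambda ^ S m)) by (apply pow_le; lra).
  rewrite <- RPow_abs, Rabs_pos_eq by lra.
  assert (Hp : (/ INR b ^ S m) ^ k <= 1) by (apply pow_le1; lra).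
  assert (Hp0 : 0 <= (/ INR b ^ S m) ^ k) by (apply pow_le; lra).
  specialize (Hbound (arg_n b s x m) (S k)).
  pose proof (Rabs_pos (Derive_n phi (S k) (arg_n b s x m))).
  assert (Hg : 0 <= gam b lambda ^ S m) by (apply pow_le; lra).
  apply Rle_trans with (gam b lambda ^ S m * 1 * (A * INR (fact (S k)) * L ^ S k)).
  - apply Rmult_le_compat; try nra. 
  - rewrite Rmult_1_r. replace (gam b lambda ^ S m) with (gam b lambda * gam b lambda ^ m) by reflexivity.
    apply Req_le; ring.
Qed.

Lemma arg_deriv s x m : is_derive (fun y => arg_n b s y m) x (/ INR b ^ S m).
Proof.
  unfold arg_n. pose proof INRb_ge2.
  assert (INR b ^ S m <> 0) by (apply pow_nonzero; lra).
  auto_derive; auto. rewrite Rmult_1_l. reflexivity.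
Qed.

Lemma Dterm_deriv k s x m :
  is_derive (fun y => Dterm b lambda phi k s y m) x (Dterm b lambda phi (S k) s x m).
Proof.
  unfold Dterm.
  assert (H : is_derive (fun y => Derive_n phi (S k) (arg_n b s y m)) x
                (/ INR b ^ S m * Derive_n phi (S (S k)) (arg_n b s x m))).
  { apply (is_derive_comp (Derive_n phi (S k)) (fun y => arg_n b s y m)).
    - apply Hsmooth.
    - apply arg_deriv. }
  set (c := gam b lambda ^ S m * (/ INR b ^ S m) ^ k).
  replace (gam b lambda ^ S m * (/ INR b ^ S m) ^ S k * Derive_n phi (S (S k)) (arg_n b s x m))
    with (c * (/ INR b ^ S m * Derive_n phi (S (S k)) (arg_n b s x m)))
    by (unfold c; rewrite <- (tech_pow_Rmult (/ INR b ^ S m) k); ring).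
  apply (is_derive_scal (fun y => Derive_n phi (S k) (arg_n b s y m)) x c _ H).
Qed.

Lemma Dterm_cont k s x m : continuity_pt (fun y => Dterm b lambda phi k s y m) x.
Proof.
  apply continuity_pt_filterlim.
  apply (ex_derive_continuous (K := R_AbsRing) (V := R_NormedModule)).
  eexists; apply Dterm_deriv.
Qed.

Lemma Dn_deriv k s x : is_derive (Dn b lambda phi k s) x (Dn b lambda phi (S k) s x).
Proof.
  pose proof gam_pos. pose proof gam_lt1.
  destruct (series_deriv (fun m y => Dterm b lambda phi k s y m)
              (fun m y => Dterm b lambda phi (S k) s y m) (gam b lambda) (Mk k) (Mk (S k)))
    with (x := x) as [H1 _].
  - lra.
  - intros; apply Dterm_bound.
  - intros; apply Dterm_bound.
  - intros; apply Dterm_deriv.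
  - intros; apply Dterm_cont.
  - unfold Dn. apply (is_derive_opp (fun y => Series (fun m => Dterm b lambda phi k s y m))). exact H1.
Qed.

Lemma Dn_bound k s x : Rabs (Dn b lambda phi k s x) <= Mk k / (1 - gam b lambda).
Proof.
  pose proof gam_pos. pose proof gam_lt1.
  unfold Dn. rewrite Rabs_Ropp. apply dom_bound; [lra|]. intros; apply Dterm_bound.
Qed.

End Ysec.

Lemma zero_of_geom (z c : R) : (forall n, Rabs z <= c * (/2) ^ n) -> z = 0.
Proof.
  intros H. destruct (Req_dec z 0) as [|Hz]; auto. exfalso.
  assert (Hc : 0 <= c) by (specialize (H 0%nat); simpl in H; pose proof (Rabs_pos z); lra).
  assert (Hzp : 0 < Rabs z) by (apply Rabs_pos_lt; auto).
  destruct (pow_lt_1_zero (/2) ltac:(rewrite Rabs_pos_eq; lra) (Rabs z / (c + 1)))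
    as [N HN]; [apply Rdiv_lt_0_compat; lra|].
  specialize (HN N (le_n _)). rewrite Rabs_pos_eq in HN by (apply pow_le; lra).
  specialize (H N).
  assert (c * (/2)^N < Rabs z).
  { apply Rle_lt_trans with ((c + 1) * (/2)^N).
    - pose proof (pow_le (/2) N ltac:(lra)). nra.
    - apply (Rmult_lt_reg_r (/ (c + 1))); [apply Rinv_0_lt_compat; lra|].
      replace ((c + 1) * (/ 2) ^ N * / (c + 1)) with ((/2)^N) by (field; lra). exact HN. }
  lra.
Qed.

Lemma nat_2pow n : INR (S (S n)) <= 2 ^ (S n).
Proof.
  induction n as [|n IH]; [simpl; lra|].
  rewrite S_INR. pose proof (pow_R1_Rle 2 n ltac:(lra)). simpl pow. simpl pow in IH. lra.
Qed.

Section Ident.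
Variable G : nat -> R -> R.
Variables K L : R.
Hypothesis HK : 0 <= K.
Hypothesis HL : 0 <= L.
Hypothesis HGd : forall j y, is_derive (G j) y (G (S j) y).
Hypothesis HGb : forall j y, Rabs (G j y) <= K * INR (fact (S j)) * L ^ j.

Lemma G_Dn j : forall y, Derive_n (G 0) j y = G j y.
Proof.
  induction j as [|j IH]; intros y; [reflexivity|].
  simpl. rewrite (Derive_ext _ _ _ IH). apply is_derive_unique, HGd.
Qed.

Lemma G_exn j y : ex_derive_n (G 0) j y.
Proof.
  destruct j as [|j]; [exact I|]. simpl.
  apply (ex_derive_ext (G j)); [intros; symmetry; apply G_Dn|].
  eexists; apply HGd.
Qed.

Definition hstep := / (4 * (L + 1)).

Lemma hstep_pos : 0 < hstep.
Proof. unfold hstep. apply Rinv_0_lt_compat; lra. Qed.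

Lemma hL_small : hstep * L <= /4.
Proof.
  unfold hstep. apply (Rmult_le_reg_l (4 * (L + 1))); [lra|].
  rewrite <- Rmult_assoc, Rinv_r by lra. lra.
Qed.

Lemma step_right x0 : (forall j, G j x0 = 0) -> forall y, x0 < y <= x0 + hstep -> G 0 y = 0.
Proof.
  intros H0 y Hy. pose proof hstep_pos. pose proof hL_small.
  apply (zero_of_geom _ (2 * K)). intros n.
  destruct (Taylor_Lagrange (G 0) n x0 y ltac:(lra)) as (zeta & Hz & Heq).
  { intros; apply G_exn. }
  rewrite Heq.
  rewrite (sum_eq_R0 _ n).
  2: { intros m _. rewrite G_Dn, H0. ring. }
  rewrite Rplus_0_l, G_Dn.
  pose proof (HGb (S n) zeta) as Hb.
  pose proof (lt_0_INR _ (lt_O_fact (S n))) as Hf.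
  assert (Hfact : INR (fact (S (S n))) = INR (S (S n)) * INR (fact (S n))) by (rewrite <- mult_INR; reflexivity).
  rewrite Hfact in Hb.
  rewrite Rabs_mult. unfold Rdiv. rewrite Rabs_mult, Rabs_pos_eq by (apply pow_le; lra).
  rewrite Rabs_pos_eq by (apply Rlt_le, Rinv_0_lt_compat; lra).
  assert (Hyy : (y - x0) ^ S n <= hstep ^ S n) by (apply pow_incr; lra).
  assert (0 <= (y - x0) ^ S n) by (apply pow_le; lra).
  apply Rle_trans with ((y - x0) ^ S n * / INR (fact (S n)) *
                         (K * (INR (S (S n)) * INR (fact (S n))) * L ^ S n)).
  { apply Rmult_le_compat_l; auto. apply Rmult_le_pos; auto. apply Rlt_le, Rinv_0_lt_compat; lra. }
  replace ((y - x0) ^ S n * / INR (fact (S n)) * (K * (INR (S (S n)) * INR (fact (S n))) * L ^ S n))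
    with (K * INR (S (S n)) * ((y - x0) * L) ^ S n) by (rewrite Rpow_mult_distr; field; lra).
  assert (HyL : ((y - x0) * L) ^ S n <= (/4) ^ S n).
  { apply pow_incr. split; [nra|]. apply Rle_trans with (hstep * L); [nra|lra]. }
  pose proof (nat_2pow n).
  assert (E : (/4) ^ S n = (/2) ^ S n * (/2) ^ S n) by (rewrite <- Rpow_mult_distr; f_equal; lra).
  assert (E2 : 2 ^ S n * (/2) ^ S n = 1) by (rewrite <- Rpow_mult_distr; replace (2 * /2) with 1 by lra; apply pow1).
  assert (0 <= (/2) ^ S n) by (apply pow_le; lra).
  assert (0 <= ((y - x0) * L) ^ S n) by (apply pow_le; nra).
  assert (Hpn : (/2) ^ S n <= (/2) ^ n) by (pose proof (pow_le (/2) n ltac:(lra)); simpl; lra).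
  apply Rle_trans with (K * 2 ^ S n * ((/2) ^ S n * (/2) ^ S n)).
  { rewrite <- E. rewrite !Rmult_assoc. apply Rmult_le_compat_l; auto.
    apply Rmult_le_compat; auto; try apply pos_INR; lra. }
  replace (K * 2 ^ S n * ((/ 2) ^ S n * (/ 2) ^ S n)) with (K * (2 ^ S n * (/2) ^ S n) * (/2) ^ S n) by ring.
  rewrite E2. nra.
Qed.

Lemma all_zero_mid x0 : (forall j, G j x0 = 0) -> forall j, G j (x0 + hstep / 2) = 0.
Proof.
  intros H0 j. pose proof hstep_pos.
  rewrite <- G_Dn. rewrite (Derive_n_ext_loc (G 0) (fun _ => 0)).
  - destruct j; [reflexivity|]. apply Derive_n_const.
  - apply (loc_of _ (hstep / 2)); [lra|]. intros t Ht. apply Rabs_lt_between in Ht.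
    apply (step_right x0); auto; lra.
Qed.

Lemma right_zero x0 : (forall j, G j x0 = 0) -> forall y, x0 <= y -> G 0 y = 0.
Proof.
  intros H0.
  assert (Hind : forall n, (forall j, G j (x0 + INR n * (hstep / 2)) = 0) /\
             forall y, x0 <= y <= x0 + INR n * (hstep / 2) -> G 0 y = 0).
  { pose proof hstep_pos. induction n as [|n [IH1 IH2]].
    - simpl. rewrite Rmult_0_l, Rplus_0_r. split; auto. intros y Hy.
      replace y with x0 by lra. apply H0.
    - rewrite S_INR. split.
      + replace (x0 + (INR n + 1) * (hstep / 2)) with ((x0 + INR n * (hstep / 2)) + hstep / 2) by ring.
        apply all_zero_mid; auto.
      + intros y Hy. destruct (Rle_dec y (x0 + INR n * (hstep / 2))) as [Hle|Hlt].
        * apply IH2; lra.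
        * apply (step_right (x0 + INR n * (hstep / 2))); auto. lra. }
  intros y Hy. pose proof hstep_pos.
  destruct (nat_arch ((y - x0) / (hstep / 2))) as [n Hn].
  apply (proj2 (Hind n)). split; auto.
  apply (Rmult_lt_compat_r (hstep / 2)) in Hn; [|lra].
  unfold Rdiv in Hn. rewrite Rmult_assoc, Rinv_l in Hn by lra. lra.
Qed.

End Ident.

Lemma identity_thm (G : nat -> R -> R) K L : 0 <= K -> 0 <= L ->
  (forall j y, is_derive (G j) y (G (S j) y)) ->
  (forall j y, Rabs (G j y) <= K * INR (fact (S j)) * L ^ j) ->
  forall x0, (forall j, G j x0 = 0) -> forall y, G O y = 0.
Proof.
  intros HK HL Hd Hb x0 H0 y.
  destruct (Rle_dec x0 y) as [Hle|Hlt].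
  - apply (right_zero G K L HK HL Hd Hb x0 H0 y Hle).
  - set (H := fun j t => (-1) ^ j * G j (- t)).
    assert (HHd : forall j t, is_derive (H j) t (H (S j) t)).
    { intros j t. unfold H.
      apply (is_derive_ext (fun t => (-1) ^ j * G j (- t))); [reflexivity|].
      replace ((-1) ^ S j * G (S j) (- t)) with ((-1) ^ j * (-1 * G (S j) (- t))) by (simpl; ring).
      apply (is_derive_scal (fun t => G j (- t))).
      apply (is_derive_comp (G j) Ropp t (G (S j) (- t)) (-1)).
      - apply Hd.
      - assert (E : is_derive (fun x : R => - x) t (-1)) by (auto_derive; auto; ring).
        exact E. }
    assert (HHb : forall j t, Rabs (H j t) <= K * INR (fact (S j)) * L ^ j).
    { intros j t. unfold H. rewrite Rabs_mult, <- RPow_abs, Rabs_m1, pow1, Rmult_1_l. apply Hb. }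
    assert (HH0 : forall j, H j (- x0) = 0).
    { intros j. unfold H. rewrite Ropp_involutive, H0. ring. }
    pose proof (right_zero H K L HK HL HHd HHb (- x0) HH0 (- y) ltac:(lra)) as E.
    unfold H in E. simpl in E. rewrite Ropp_involutive in E. lra.
Qed.

Lemma partial_geom_bound (d : nat -> R) c q n : 0 <= q < 1 -> 0 <= c ->
  (forall m, (m <= n)%nat -> Rabs (d m) <= c * q ^ m) ->
  Rabs (sum_f_R0 d n) <= c / (1 - q).
Proof.
  intros Hq Hc H.
  eapply Rle_trans; [apply sum_f_R0_triangle|].
  apply Rle_trans with (sum_f_R0 (fun m => c * q ^ m) n).
  - apply sum_Rle. intros; apply H; auto.
  - assert (E : sum_f_R0 (fun m => c * q ^ m) n = c * sum_f_R0 (fun m => q ^ m) n).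
    { clear H. rewrite scal_sum. apply sum_eq. intros; ring. }
    rewrite E.
    rewrite tech3 by lra. unfold Rdiv.
    assert (0 <= q ^ S n) by (apply pow_le; lra).
    assert (0 < / (1 - q)) by (apply Rinv_0_lt_compat; lra).
    assert (0 <= c * / (1 - q) * q ^ S n) by (apply Rmult_le_pos; [apply Rmult_le_pos|]; lra).
    nra.
Qed.

Section Cont.
Variable b : nat.
Variable lambda : R.
Variable phi : R -> R.
Hypothesis hb : (2 <= b)%nat.
Hypothesis hl1 : / INR b < lambda.
Hypothesis hl2 : lambda < 1.
Variables A L : R.
Hypothesis HA : 0 <= A.
Hypothesis HL : 0 <= L.
Hypothesis Hbound : forall y k, Rabs (Derive_n phi k y) <= A * INR (fact k) * L ^ k.
Hypothesis Hsmooth : forall k y, is_derive (Derive_n phi k) y (Derive_n phi (S k) y).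

Lemma arg_diff (s s' : nat -> nat) y y' N m : (forall k, (k < N)%nat -> s k = s' k) -> (m < N)%nat ->
  arg_n b s y m - arg_n b s' y' m = (y - y') / INR b ^ S m.
Proof.
  intros Hs Hm. unfold arg_n.
  rewrite (sum_eq (fun k => INR (s k) / INR b ^ (S m - k)) (fun k => INR (s' k) / INR b ^ (S m - k))).
  - unfold Rdiv. ring.
  - intros i Hi. rewrite Hs; auto; lia.
Qed.

Lemma phi_lip k p p' : Rabs (Derive_n phi k p - Derive_n phi k p') <=
   A * INR (fact (S k)) * L ^ (S k) * Rabs (p - p').
Proof.
  destruct (MVT_abs (Derive_n phi k) (Derive_n phi (S k)) p' p) as (c & Hc & _).
  { intros c _. apply is_derive_Reals, Hsmooth. }
  rewrite Hc. apply Rmult_le_compat_r; [apply Rabs_pos|apply Hbound].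
Qed.

Lemma Dn_cont j eps : 0 < eps -> exists N, forall s s' y y',
  (forall k, (k < N)%nat -> s k = s' k) -> Rabs (y - y') <= (/2) ^ N ->
  Rabs (Dn b lambda phi j s y - Dn b lambda phi j s' y') < eps.
Proof.
  intros He.
  assert (Hg0 : 0 < gam b lambda) by (eapply gam_pos; eauto).
  assert (Hg1 : gam b lambda < 1) by (eapply gam_lt1; eauto).
  set (g := gam b lambda) in *.
  set (B := A * INR (fact (S (S j))) * L ^ (S (S j))).
  assert (HB : 0 <= B).
  { unfold B. pose proof (pos_INR (fact (S (S j)))). pose proof (pow_le L (S (S j)) HL).
    apply Rmult_le_pos; [apply Rmult_le_pos|]; lra. }
  set (Mj := Mk b lambda A L j). assert (HMj : 0 <= Mj) by (apply Mk_nonneg; auto).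
  set (rho := Rmax (/2) g).
  assert (Hrho : 0 <= rho < 1) by (unfold rho; split; [pose proof (Rmax_l (/2) g); lra|apply Rmax_lub_lt; lra]).
  destruct (pow_lt_1_zero rho ltac:(rewrite Rabs_pos_eq; lra) (eps * (1 - g) / (2 * (B + 2 * Mj + 1))))
    as [N0 HN0].
  { apply Rdiv_lt_0_compat; [apply Rmult_lt_0_compat|]; lra. }
  set (N := S N0). exists N.
  intros s s' y y' Hs Hy.
  assert (HrN : rho ^ N < eps * (1 - g) / (2 * (B + 2 * Mj + 1))).
  { specialize (HN0 N ltac:(unfold N; lia)). rewrite Rabs_pos_eq in HN0 by (apply pow_le; lra). exact HN0. }
  assert (H2N : (/2) ^ N <= rho ^ N) by (apply pow_incr; split; [lra|apply Rmax_l]).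
  assert (HgN : g ^ N <= rho ^ N) by (apply pow_incr; split; [lra|apply Rmax_r]).
  set (a := fun m => Dterm b lambda phi j s y m).
  set (a' := fun m => Dterm b lambda phi j s' y' m).
  assert (Ea : ex_series a) by (apply (dom_ex _ Mj g); [lra|intros; eapply Dterm_bound; eauto]).
  assert (Ea' : ex_series a') by (apply (dom_ex _ Mj g); [lra|intros; eapply Dterm_bound; eauto]).
  set (d := fun m => a m - a' m).
  assert (Hd_all : forall m, Rabs (d m) <= (2 * Mj) * g ^ m).
  { intros m. unfold d. eapply Rle_trans; [apply Rabs_triang|]. rewrite Rabs_Ropp.
    assert (H : Rabs (Dterm b lambda phi j s y m) <= Mj * g ^ m) by (eapply Dterm_bound; eauto).
    assert (H0 : Rabs (Dterm b lambda phi j s' y' m) <= Mj * g ^ m) by (eapply Dterm_bound; eauto).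
    unfold a, a'. lra. }
  assert (Hd_small : forall m, (m < N)%nat -> Rabs (d m) <= (B * (/2) ^ N) * g ^ m).
  { intros m Hm. unfold d, a, a', Dterm. fold g.
    replace (g ^ S m * (/ INR b ^ S m) ^ j * Derive_n phi (S j) (arg_n b s y m) -
             g ^ S m * (/ INR b ^ S m) ^ j * Derive_n phi (S j) (arg_n b s' y' m))
      with (g ^ S m * (/ INR b ^ S m) ^ j * (Derive_n phi (S j) (arg_n b s y m) -
              Derive_n phi (S j) (arg_n b s' y' m))) by ring.
    rewrite Rabs_mult. pose proof (phi_lip (S j) (arg_n b s y m) (arg_n b s' y' m)) as Hl.
    fold B in Hl. rewrite (arg_diff s s' y y' N m Hs Hm) in Hl.
    assert (Hib : 0 < / INR b ^ S m <= 1) by (eapply invb_pow_bounds; eauto). destruct Hib as [Hi1 Hi2].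
    assert (Hq : Rabs ((y - y') / INR b ^ S m) <= (/2) ^ N).
    { unfold Rdiv. rewrite Rabs_mult, (Rabs_pos_eq (/ INR b ^ S m)) by lra.
      pose proof (Rabs_pos (y - y')). nra. }
    assert (Hc : Rabs (g ^ S m * (/ INR b ^ S m) ^ j) <= g ^ m).
    { rewrite Rabs_mult, <- !RPow_abs, !Rabs_pos_eq by lra.
      assert ((/ INR b ^ S m) ^ j <= 1) by (apply pow_le1; lra).
      assert (0 <= (/ INR b ^ S m) ^ j) by (apply pow_le; lra).
      assert (0 <= g ^ m) by (apply pow_le; lra).
      rewrite <- tech_pow_Rmult.
      assert (g * (/ INR b ^ S m) ^ j <= 1) by nra.
      assert (0 <= g * (/ INR b ^ S m) ^ j) by nra.
      replace (g * g ^ m * (/ INR b ^ S m) ^ j) with ((g * (/ INR b ^ S m) ^ j) * g ^ m) by ring.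
      nra. }
    apply Rle_trans with (g ^ m * (B * (/2) ^ N)).
    - apply Rmult_le_compat; try apply Rabs_pos; auto. eapply Rle_trans; [exact Hl|].
      apply Rmult_le_compat_l; auto.
    - lra. }
  replace (Dn b lambda phi j s y - Dn b lambda phi j s' y') with (- Series d).
  2: { unfold Dn, d. rewrite Series_minus by auto. fold a a'. ring. }
  rewrite Rabs_Ropp.
  replace (Series d) with (sum_f_R0 d (pred N) + (Series d - sum_f_R0 d (pred N))) by ring.
  eapply Rle_lt_trans; [apply Rabs_triang|].
  assert (Ed : forall m, Rabs (d m) <= (B * (/2) ^ N + 2 * Mj) * g ^ m).
  { intros m. pose proof (Hd_all m). pose proof (pow_le g m ltac:(lra)).
    assert (0 <= B * (/2) ^ N) by (apply Rmult_le_pos; auto; apply pow_le; lra). nra. }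
  assert (T1 : Rabs (sum_f_R0 d (pred N)) <= B * (/2) ^ N / (1 - g)).
  { apply partial_geom_bound; [lra| |].
    - apply Rmult_le_pos; auto; apply pow_le; lra.
    - intros m Hm. apply Hd_small. unfold N in *; simpl in Hm; lia. }
  pose proof (dom_tail d (2 * Mj) g (pred N) ltac:(lra) Hd_all) as T2.
  replace (S (pred N)) with N in T2 by (unfold N; reflexivity).
  assert (Hsum : B * (/2) ^ N + 2 * Mj * g ^ N <= (B + 2 * Mj + 1) * rho ^ N).
  { assert (0 <= rho ^ N) by (apply pow_le; lra). nra. }
  assert (Hlt : (B + 2 * Mj + 1) * rho ^ N < eps * (1 - g) / 2).
  { apply (Rmult_lt_compat_l (B + 2 * Mj + 1)) in HrN; [|lra].
    replace ((B + 2 * Mj + 1) * (eps * (1 - g) / (2 * (B + 2 * Mj + 1)))) with (eps * (1 - g) / 2) in HrN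
      by (field; lra). exact HrN. }
  assert (Hfin : (B * (/2) ^ N + 2 * Mj * g ^ N) / (1 - g) < eps).
  { apply (Rmult_lt_reg_r (1 - g)); [lra|]. unfold Rdiv. rewrite Rmult_assoc, Rinv_l by lra. assert (0 < eps * (1 - g)) by (apply Rmult_lt_0_compat; lra). lra. }
  unfold Rdiv in T1, T2, Hfin. lra.
Qed.

End Cont.

Section Main.
Variable b : nat.
Variable lambda : R.
Variable phi : R -> R.
Hypothesis hb : (2 <= b)%nat.
Hypothesis hl1 : / INR b < lambda.
Hypothesis hl2 : lambda < 1.
Variables A L : R.
Hypothesis HA : 0 <= A.
Hypothesis HL : 0 <= L.
Hypothesis Hbound : forall y k, Rabs (Derive_n phi k y) <= A * INR (fact k) * L ^ k.
Hypothesis Hsmooth : forall k y, is_derive (Derive_n phi k) y (Derive_n phi (S k) y).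

Notation D := (Dn b lambda phi).

Lemma D_deriv k s x : is_derive (D k s) x (D (S k) s x).
Proof. eapply Dn_deriv; eauto. Qed.

Lemma D_cont k s x : continuous (D k s) x.
Proof. apply (ex_derive_continuous (K := R_AbsRing) (V := R_NormedModule)). eexists; apply D_deriv. Qed.

Lemma Gamma_deriv s x : is_derive (Gammafun b lambda phi s) x (D 0 s x).
Proof.
  apply (is_derive_ext (fun x => RInt (D 0 s) 0 x)).
  { intros t. unfold Gammafun. apply RInt_ext. intros; symmetry; apply Yfun_Dn0. }
  apply (is_derive_RInt (D 0 s) (fun x => RInt (D 0 s) 0 x) 0).
  - apply filter_forall. intros y. apply (RInt_correct (V := R_CompleteNormedModule)). apply (ex_RInt_continuous (V := R_CompleteNormedModule)).
    intros; apply D_cont.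
  - apply D_cont.
Qed.

Lemma diff_Dn (u v : nat -> nat) j : forall x,
  Derive_n (fun t => D 0 u t - D 0 v t) j x = D j u x - D j v x.
Proof.
  induction j as [|j IH]; intros x; [reflexivity|].
  simpl. rewrite (Derive_ext _ _ _ IH). apply is_derive_unique.
  apply (is_derive_minus (D j u) (D j v)); apply D_deriv.
Qed.

Lemma f_derivs (f : R -> R) u v :
  (forall x, f x = Gammafun b lambda phi u x - Gammafun b lambda phi v x) ->
  forall j x, Derive_n f (S j) x = D j u x - D j v x.
Proof.
  intros Hf j x.
  assert (Hd : forall t, Derive f t = D 0 u t - D 0 v t).
  { intros t. apply is_derive_unique.
    apply (is_derive_ext (fun x => Gammafun b lambda phi u x - Gammafun b lambda phi v x)).
    { intros; symmetry; apply Hf. }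
    apply (is_derive_minus (Gammafun b lambda phi u) (Gammafun b lambda phi v)); apply Gamma_deriv. }
  replace (S j) with (j + 1)%nat by lia. rewrite <- Derive_n_comp.
  rewrite (Derive_n_ext (Derive_n f 1) (fun t => D 0 u t - D 0 v t)) by exact Hd.
  apply diff_Dn.
Qed.


Lemma zero_of_inv (z : R) m0 : (forall m, (m0 <= m)%nat -> Rabs z <= / INR (S m)) -> z = 0.
Proof.
  intros H. destruct (Req_dec z 0) as [|Hz]; auto. exfalso.
  assert (Hzp : 0 < Rabs z) by (apply Rabs_pos_lt; auto).
  destruct (nat_arch (/ Rabs z)) as [n Hn].
  specialize (H (Nat.max m0 n) ltac:(lia)).
  assert (INR n <= INR (S (Nat.max m0 n))) by (apply le_INR; lia).
  assert (Hlt : / INR (S (Nat.max m0 n)) < Rabs z).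
  { replace (Rabs z) with (/ / Rabs z) by (field; lra).
    assert (0 < / Rabs z) by (apply Rinv_0_lt_compat; lra).
    apply Rinv_lt_contravar; [|lra]. apply Rmult_lt_0_compat; lra. }
  lra.
Qed.

Lemma half_pow_mono n m : (n <= m)%nat -> (/2) ^ m <= (/2) ^ n.
Proof.
  intros H. replace m with (n + (m - n))%nat by lia. rewrite pow_add.
  pose proof (pow_le (/2) n ltac:(lra)). assert ((/2) ^ (m - n) <= 1) by (apply pow_le1; lra).
  assert (0 <= (/2) ^ (m - n)) by (apply pow_le; lra). nra.
Qed.

Lemma inv_mono m m' : (m <= m')%nat -> / INR (S m') <= / INR (S m).
Proof.
  intros H. apply Rinv_le_contravar; [apply lt_0_INR; lia|]. apply le_INR; lia.
Qed.

Definition first (u v : nat -> nat) m := forall y, 0 <= y <= 1 -> Rabs (D 0 u y - D 0 v y) <= / INR (S m).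
Definition second (u v : nat -> nat) x m := forall j, (j < S m)%nat -> Rabs (D j u x - D j v x) <= / INR (S m).

Lemma core : cond_H b lambda phi ->
  exists (eps1 : R) (Q1 : nat), 0 < eps1 /\ (1 <= Q1)%nat /\
    forall f : R -> R, in_F1 b lambda phi f ->
      Rbar_le (Finite eps1)
        (Lub_Rbar (fun y => exists x, 0 <= x <= 1 /\ y = Rabs (Derive f x))) /\
      (forall x, 0 <= x <= 1 ->
         exists k : nat, (1 <= k)%nat /\ (k <= Q1)%nat /\
           eps1 <= Rabs (Derive_n f k x)).
Proof.
  intros HH. apply NNPP; intro Hneg.
  set (S := fun m (u v : nat -> nat) x => u 0%nat <> v 0%nat /\
     ((forall y, 0 <= y <= 1 -> Rabs (D 0 u y - D 0 v y) < / INR (Datatypes.S m)) \/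
      (forall j, (j < Datatypes.S m)%nat -> Rabs (D j u x - D j v x) < / INR (Datatypes.S m)))).
  assert (Snest : forall m m' u v x, (m <= m')%nat -> S m' u v x -> S m u v x).
  { intros m m' u v x Hm [H0 [H1|H1]]; split; auto; [left|right].
    - intros y Hy. eapply Rlt_le_trans; [apply H1; auto|apply inv_mono; auto].
    - intros j Hj. eapply Rlt_le_trans; [apply H1; lia|apply inv_mono; auto]. }
  assert (Sne : forall m, exists u v x, in_Sigma b u /\ in_Sigma b v /\ 0 <= x <= 1 /\ S m u v x).
  { intros m. apply NNPP; intro Hno. apply Hneg.
    exists (/ INR (Datatypes.S m)), (Datatypes.S m). split; [apply Rinv_0_lt_compat, lt_0_INR; lia|].
    split; [lia|]. intros f (u & v & Hu & Hv & Huv & Hf). split.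
    - apply NNPP; intro Hc. apply Rbar_not_le_lt in Hc.
      apply Hno. exists u, v, 0. repeat split; auto; try lra. left. intros y Hy.
      destruct (Lub_Rbar_correct (fun y => exists x, 0 <= x <= 1 /\ y = Rabs (Derive f x))) as [Hub _].
      specialize (Hub (Rabs (Derive f y)) (ex_intro _ y (conj Hy eq_refl))).
      assert (E : Derive f y = D 0 u y - D 0 v y) by (apply (f_derivs f u v Hf 0)).
      rewrite <- E.
      destruct (Lub_Rbar _) as [l| |]; simpl in *; try contradiction; lra.
    - intros x Hx. apply NNPP; intro Hk. apply Hno. exists u, v, x. repeat split; try tauto; try lra. right.
      intros j Hj. rewrite <- (f_derivs f u v Hf j). apply Rnot_le_lt. intros Hle.
      apply Hk. exists (Datatypes.S j). repeat split; auto; lia. }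
  destruct (compact_main b ltac:(lia) S Snest Sne) as (us & vs & xs & Hus & Hvs & Hxs & Happ).
  assert (Huv0 : us 0%nat <> vs 0%nat).
  { destruct (Happ 0%nat 1%nat) as (u' & v' & x' & _ & _ & _ & [Hne _] & Hpre & _).
    destruct (Hpre 0%nat ltac:(lia)) as [E1 E2]. congruence. }
  assert (Hlim : forall m, first us vs m \/ second us vs xs m).
  { intros m. apply NNPP; intro Hno. apply not_or_and in Hno as [Hn1 Hn2].
    unfold first in Hn1. apply not_all_ex_not in Hn1 as [y Hy].
    apply imply_to_and in Hy as [Hy Hy2]. apply Rnot_le_lt in Hy2.
    unfold second in Hn2. apply not_all_ex_not in Hn2 as [j Hj].
    apply imply_to_and in Hj as [Hj Hj2]. apply Rnot_le_lt in Hj2.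
    set (e := / INR (Datatypes.S m)) in *.
    set (d1 := Rabs (D 0 us y - D 0 vs y) - e).
    set (d2 := Rabs (D j us xs - D j vs xs) - e).
    destruct (Dn_cont b lambda phi hb hl1 hl2 A L HA HL Hbound Hsmooth 0 (d1 / 2)) as [N1 HN1]; [unfold d1; lra|].
    destruct (Dn_cont b lambda phi hb hl1 hl2 A L HA HL Hbound Hsmooth j (d2 / 2)) as [N2 HN2]; [unfold d2; lra|].
    set (N := Nat.max N1 N2).
    destruct (Happ m N) as (u' & v' & x' & _ & _ & _ & [_ HS] & Hpre & Hx').
    assert (Hp1 : forall k, (k < N1)%nat -> u' k = us k) by (intros k Hk; apply Hpre; lia).
    assert (Hq1 : forall k, (k < N1)%nat -> v' k = vs k) by (intros k Hk; apply Hpre; lia).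
    assert (Hp2 : forall k, (k < N2)%nat -> u' k = us k) by (intros k Hk; apply Hpre; lia).
    assert (Hq2 : forall k, (k < N2)%nat -> v' k = vs k) by (intros k Hk; apply Hpre; lia).
    assert (HN1' : (/2) ^ N <= (/2) ^ N1) by (apply half_pow_mono; lia).
    assert (HN2' : (/2) ^ N <= (/2) ^ N2) by (apply half_pow_mono; lia).
    assert (H0y : Rabs (y - y) <= (/2) ^ N1) by (rewrite Rminus_eq_0, Rabs_R0; apply pow_le; lra).
    destruct HS as [HS|HS].
    - specialize (HS y Hy). fold e in HS.
      pose proof (HN1 u' us y y Hp1 H0y) as T1. pose proof (HN1 v' vs y y Hq1 H0y) as T2.
      pose proof (Rabs_triang_inv (D 0 us y - D 0 vs y) (D 0 u' y - D 0 v' y)) as T3.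
      pose proof (Rabs_triang (D 0 u' y - D 0 us y) (- (D 0 v' y - D 0 vs y))) as T4.
      rewrite Rabs_Ropp in T4.
      replace (D 0 us y - D 0 vs y - (D 0 u' y - D 0 v' y))
        with (- (D 0 u' y - D 0 us y + - (D 0 v' y - D 0 vs y))) in T3 by ring.
      rewrite Rabs_Ropp in T3. unfold d1 in *. lra.
    - specialize (HS j Hj). fold e in HS.
      assert (Hx2 : Rabs (x' - xs) <= (/2) ^ N2) by lra.
      pose proof (HN2 u' us x' xs Hp2 Hx2) as T1. pose proof (HN2 v' vs x' xs Hq2 Hx2) as T2.
      pose proof (Rabs_triang_inv (D j us xs - D j vs xs) (D j u' x' - D j v' x')) as T3.
      pose proof (Rabs_triang (D j u' x' - D j us xs) (- (D j v' x' - D j vs xs))) as T4.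
      rewrite Rabs_Ropp in T4.
      replace (D j us xs - D j vs xs - (D j u' x' - D j v' x'))
        with (- (D j u' x' - D j us xs + - (D j v' x' - D j vs xs))) in T3 by ring.
      rewrite Rabs_Ropp in T3. unfold d2 in *. lra. }
  set (G := fun j y => D j us y - D j vs y).
  assert (Hx0 : exists x0, forall j, G j x0 = 0).
  { destruct (classic (forall m, first us vs m)) as [Hall|Hnall].
    - assert (Hz : forall y, 0 <= y <= 1 -> G 0%nat y = 0).
      { intros y Hy. apply (zero_of_inv _ 0). intros m _. apply Hall; auto. }
      exists (/2). intros j.
      unfold G. rewrite <- (diff_Dn us vs j). rewrite (Derive_n_ext_loc _ (fun _ => 0)).
      + destruct j; [reflexivity|]. apply Derive_n_const.
      + apply (loc_of (/2) (/2)); [lra|]. intros t Ht. apply Rabs_lt_between in Ht.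
        apply Hz. lra.
    - apply not_all_ex_not in Hnall as [m0 Hm0].
      exists xs. intros j. apply (zero_of_inv _ (Nat.max m0 j)). intros m Hm.
      destruct (Hlim m) as [H1|H1].
      + exfalso. apply Hm0. intros y Hy. eapply Rle_trans; [apply H1; auto|apply inv_mono; lia].
      + apply H1. lia. }
  destruct Hx0 as [x0 Hx0].
  assert (Hg0 : 0 < gam b lambda) by (eapply gam_pos; eauto).
  assert (Hg1 : gam b lambda < 1) by (eapply gam_lt1; eauto).
  set (K := 2 * A * L * gam b lambda / (1 - gam b lambda)).
  assert (HK : 0 <= K).
  { unfold K. apply Rmult_le_pos; [|apply Rlt_le, Rinv_0_lt_compat; lra].
    apply Rmult_le_pos; [|lra]. apply Rmult_le_pos; lra. }
  assert (HGd : forall j y, is_derive (G j) y (G (Datatypes.S j) y)).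
  { intros j y. apply (is_derive_minus (D j us) (D j vs)); apply D_deriv. }
  assert (HGb : forall j y, Rabs (G j y) <= K * INR (fact (Datatypes.S j)) * L ^ j).
  { intros j y. unfold G. eapply Rle_trans; [apply Rabs_triang|]. rewrite Rabs_Ropp.
    assert (B1 : Rabs (D j us y) <= Mk b lambda A L j / (1 - gam b lambda)) by (eapply Dn_bound; eauto).
    assert (B2 : Rabs (D j vs y) <= Mk b lambda A L j / (1 - gam b lambda)) by (eapply Dn_bound; eauto).
    apply Rle_trans with (2 * (Mk b lambda A L j / (1 - gam b lambda))); [lra|].
    apply Req_le. unfold K, Mk. simpl pow. field. lra. }
  pose proof (identity_thm G K L HK HL HGd HGb x0 Hx0) as Hzero.
  destruct (HH vs us Hvs Hus) as [x Hx].
  { intros E. apply Huv0. rewrite E. reflexivity. }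
  apply Hx. rewrite !Yfun_Dn0. apply Hzero.
Qed.

End Main.

Theorem mainTheorem16 (b : nat) (lambda : R) (phi : R -> R) :
  (2 <= b)%nat ->
  / INR b < lambda -> lambda < 1 ->
  real_analytic phi -> Z_periodic phi -> cond_H b lambda phi ->
  exists (eps1 : R) (Q1 : nat), 0 < eps1 /\ (1 <= Q1)%nat /\
    forall f : R -> R, in_F1 b lambda phi f ->
      Rbar_le (Finite eps1)
        (Lub_Rbar (fun y => exists x, 0 <= x <= 1 /\ y = Rabs (Derive f x))) /\
      (forall x, 0 <= x <= 1 ->
         exists k : nat, (1 <= k)%nat /\ (k <= Q1)%nat /\
           eps1 <= Rabs (Derive_n f k x)).
Proof.
  intros hb hl1 hl2 Han Hper HH.
  destruct (phi_bound phi Han Hper) as (A & L & HA & HL & Hb).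
  apply (core b lambda phi hb hl1 hl2 A L HA HL Hb (phi_deriv phi Han)); auto.
Qed.
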